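(* Let $\alpha\in\mathcal A\cap\mathbb R$ be simple, and for $k\in\mathbb C$ let $u(k)$, $u^*(k)$ be unit vectors spanning $\ker_{L^2_0}(D(\alpha)+k)$ and $\ker_{L^2_0}(D(\alpha)^*+\bar k)$ respectively. Then $$\langle u(k)|C|u(k)\rangle=\langle u^*(k)|C|u^*(k)\rangle\quad\text{for all }k\in\mathbb C,$$ i.e. $e_+(k)=e_-(k)$ where $e_+(k)=-\langle u(k)|C|u(k)\rangle$, $e_-(k)=-\langle u^*(k)|C|u^*(k)\rangle$.
   Context: Let $\omega=e^{2\pi i/3}$, $\Lambda=\mathbb Z\oplus\omega\mathbb Z$, $K=\frac43\pi$, $\langle z,w\rangle=\operatorname{Re}(z\bar w)$. Let $U,V\in C^\infty(\mathbb C)$ satisfy, for all $z$ and $\gamma\in\Lambda$: $U(z+\gamma)=e^{i\langle\gamma,K\rangle}U(z)$, $U(\omega z)=\omega U(z)$, $\overline{U(\bar z)}=-U(-z)$, and $V(z)=V(\bar z)=\overline{V(-z)}$, $V(\omega z)=V(z)$, $V(z+\gamma)=e^{i\langle\gamma,K\rangle}V(z)$. With $D_{\bar z}=-i\partial_{\bar z}$, $D(\alpha)=\begin{pmatrix}2D_{\bar z}&\alpha U(z)\\ \alpha U(-z)&2D_{\bar z}\end{pmatrix}$, $C=\begin{pmatrix}0&V(z)\\ V(-z)&0\end{pmatrix}$. $L_\gamma u(z)=\operatorname{diag}(e^{i\langle\gamma,K\rangle},e^{-i\langle\gamma,K\rangle})u(z+\gamma)$ and $L^2_0=L^2_0(\mathbb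 C;\mathbb C^2)=\{u\in L^2_{loc}(\mathbb C;\mathbb C^2):L_\gamma u=u\ \forall\gamma\in\Lambda\}$, with $\langle v|A|w\rangle=\int_{\mathbb C/\Lambda}(Aw)\cdot\bar v\,dm$. $\alpha$ is magic ($\alpha\in\mathcal A$) if $\ker_{L^2_0}(D(\alpha)+k)\ne\{0\}$ for all $k\in\mathbb C$, and simple if this kernel is one-dimensional for all $k$ (then also $\ker_{L^2_0}(D(\alpha)^*+\bar k)$ is one-dimensional). *)

(* Defs.v *)
From Stdlib Require Import Reals ZArith List.
From Coquelicot Require Import Coquelicot.

Open Scope R_scope.

Notation CC := Complex.C.

Definition cre (z : CC) : R := fst z.
Definition cim (z : CC) : R := snd z.
Definition cconj (z : CC) : CC := Cconj z.
(* omega = e^{2 pi i/3} = -1/2 + i sqrt3/2 *)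
Definition omega : CC := (-(1/2), sqrt 3 / 2).
Definition Kpt : CC := RtoC (4 * PI / 3).
Definition rinner (z w : CC) : R := cre (Cmult z (cconj w)).
Definition cexpi (t : R) : CC := (cos t, sin t).
Definition latpt (a b : Z) : CC := Cplus (RtoC (IZR a)) (Cmult (RtoC (IZR b)) omega).
Definition chi (g : CC) : CC := cexpi (rinner g Kpt).

(* direction: true = x (real direction), false = y (imaginary direction) *)
Definition dirv (d : bool) : CC := if d then (1, 0) else (0, 1).
Definition line (f : CC -> CC) (d : bool) (p : CC) (t : R) : CC :=
  f (Cplus p (Cmult (RtoC t) (dirv d))).
Definition pd (d : bool) (f : CC -> CC) (p : CC) : CC :=
  (Derive (fun t => cre (line f d p t)) 0, Derive (fun t => cim (line f d p t)) 0).
Fixpoint iterpd (ds : list bool) (f : CC -> CC) : CC -> CC :=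
  match ds with nil => f | d :: ds' => pd d (iterpd ds' f) end.
Definition smooth (f : CC -> CC) : Prop :=
  forall ds : list bool,
    (forall p : CC, continuous (iterpd ds f) p) /\
    (forall (d : bool) (p : CC),
        ex_derive (fun t => cre (line (iterpd ds f) d p t)) 0 /\
        ex_derive (fun t => cim (line (iterpd ds f) d p t)) 0).

Definition dzb (f : CC -> CC) (p : CC) : CC :=
  Cmult (RtoC (1/2)) (Cplus (pd true f p) (Cmult Ci (pd false f p))).
Definition dz (f : CC -> CC) (p : CC) : CC :=
  Cmult (RtoC (1/2)) (Cminus (pd true f p) (Cmult Ci (pd false f p))).
Definition Dzb (f : CC -> CC) (p : CC) : CC := Cmult (Copp Ci) (dzb f p).
Definition Dz (f : CC -> CC) (p : CC) : CC := Cmult (Copp Ci) (dz f p).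

Definition U_hyp (U : CC -> CC) : Prop :=
  smooth U /\
  (forall z a b, U (Cplus z (latpt a b)) = Cmult (chi (latpt a b)) (U z)) /\
  (forall z, U (Cmult omega z) = Cmult omega (U z)) /\
  (forall z, cconj (U (cconj z)) = Copp (U (Copp z))).

Definition V_hyp (V : CC -> CC) : Prop :=
  smooth V /\
  (forall z, V z = V (cconj z)) /\
  (forall z, V (cconj z) = cconj (V (Copp z))) /\
  (forall z, V (Cmult omega z) = V z) /\
  (forall z a b, V (Cplus z (latpt a b)) = Cmult (chi (latpt a b)) (V z)).

Definition vfun := CC -> CC * CC.

Definition L0_inv (u : vfun) : Prop :=
  forall z a b,
    Cmult (chi (latpt a b)) (fst (u (Cplus z (latpt a b)))) = fst (u z) /\
    Cmult (cconj (chi (latpt a b))) (snd (u (Cplus z (latpt a b)))) = snd (u z).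

(* smooth elements of L^2_0 (kernel elements of the elliptic operators are smooth) *)
Definition L0_smooth (u : vfun) : Prop :=
  smooth (fun z => fst (u z)) /\ smooth (fun z => snd (u z)) /\ L0_inv u.

Definition Dk (U : CC -> CC) (alpha : CC) (k : CC) (u : vfun) : vfun :=
  fun z =>
    (Cplus (Cplus (Cmult 2 (Dzb (fun w => fst (u w)) z)) (Cmult alpha (Cmult (U z) (snd (u z)))))
           (Cmult k (fst (u z))),
     Cplus (Cplus (Cmult alpha (Cmult (U (Copp z)) (fst (u z)))) (Cmult 2 (Dzb (fun w => snd (u w)) z)))
           (Cmult k (snd (u z)))).

(* (D(alpha)^* + conj k) u, with D(alpha)^* the formal L^2 adjoint:
   D(alpha)^* = [[2 D_z, conj alpha conj(U(-z))], [conj alpha conj(U(z)), 2 D_z]] *)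
Definition Dstark (U : CC -> CC) (alpha : CC) (k : CC) (u : vfun) : vfun :=
  fun z =>
    (Cplus (Cplus (Cmult 2 (Dz (fun w => fst (u w)) z))
                  (Cmult (cconj alpha) (Cmult (cconj (U (Copp z))) (snd (u z)))))
           (Cmult (cconj k) (fst (u z))),
     Cplus (Cplus (Cmult (cconj alpha) (Cmult (cconj (U z)) (fst (u z))))
                  (Cmult 2 (Dz (fun w => snd (u w)) z)))
           (Cmult (cconj k) (snd (u z)))).

Definition is_zero_vfun (u : vfun) : Prop := forall z, u z = (RtoC 0, RtoC 0).

Definition in_ker_D (U : CC -> CC) (alpha k : CC) (u : vfun) : Prop :=
  L0_smooth u /\ is_zero_vfun (Dk U alpha k u).
Definition in_ker_Dstar (U : CC -> CC) (alpha k : CC) (u : vfun) : Prop :=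
  L0_smooth u /\ is_zero_vfun (Dstark U alpha k u).

Definition magic (U : CC -> CC) (alpha : CC) : Prop :=
  forall k : CC, exists u, in_ker_D U alpha k u /\ ~ is_zero_vfun u.

Definition simple (U : CC -> CC) (alpha : CC) : Prop :=
  forall k : CC, exists u0, in_ker_D U alpha k u0 /\ ~ is_zero_vfun u0 /\
    forall u, in_ker_D U alpha k u ->
      exists c : CC, forall z, u z = (Cmult c (fst (u0 z)), Cmult c (snd (u0 z))).

(* fundamental domain {s + t omega : s,t in [0,1]}; Jacobian = Im omega = sqrt3/2 *)
Definition int_torus (f : CC -> CC) : CC :=
  (sqrt 3 / 2 * RInt (fun s => RInt (fun t => cre (f (Cplus (RtoC s) (Cmult (RtoC t) omega)))) 0 1) 0 1,
   sqrt 3 / 2 * RInt (fun s => RInt (fun t => cim (f (Cplus (RtoC s) (Cmult (RtoC t) omega)))) 0 1) 0 1).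

(* <v|A|w> = int_{C/Lambda} (A w) . conj v dm ; here the operator is passed applied *)
Definition braket (v Aw : vfun) : CC :=
  int_torus (fun z => Cplus (Cmult (fst (Aw z)) (cconj (fst (v z))))
                            (Cmult (snd (Aw z)) (cconj (snd (v z))))).

Definition unit_vec (u : vfun) : Prop := braket u u = RtoC 1.

Definition Cop (V : CC -> CC) (w : vfun) : vfun :=
  fun z => (Cmult (V z) (snd (w z)), Cmult (V (Copp z)) (fst (w z))).

(* Main.v *)
Require Import Defs.
From Stdlib Require Import Reals ZArith List.
From Coquelicot Require Import Coquelicot.
From Stdlib Require Import Lra FunctionalExtensionality PropExtensionality.
Open Scope R_scope.


Ltac toR := match goal with |- ?a = ?b => change (@eq R a b) end.
Lemma scal_R (k x : R) : scal k x = k * x. Proof. reflexivity. Qed.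
Lemma opp_R (x : R) : opp x = - x. Proof. reflexivity. Qed.
Lemma RInt_empty (f : R -> R) a b : (forall v, ~ is_RInt f a b v) -> RInt f a b = 0.
Proof.
  intros H. unfold RInt, iota. unfold lim; simpl. unfold R_complete_lim.
  match goal with |- real (Lub_Rbar ?P) = _ => replace P with (fun _ : R => True) end.
  2:{ apply functional_extensionality; intros A; apply propositional_extensionality; split; auto.
      intros _ x Hx; exfalso; exact (H x Hx). }
  replace (Lub_Rbar (fun _ : R => True)) with p_infty. reflexivity.
  symmetry. apply is_lub_Rbar_unique. split.
  - intros x _; simpl; auto.
  - intros l Hl. destruct l as [l| |]; simpl; auto.
    + specialize (Hl (l+1) I). simpl in Hl. lra.
    + specialize (Hl 0 I). simpl in Hl. auto.
Qed.


Lemma RInt_scal_any (f : R -> R) a b r : RInt (fun x => r * f x) a b = r * RInt f a b.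
Proof.
  destruct (Req_dec r 0) as [->|Hr].
  - rewrite Rmult_0_l. replace (fun x => 0 * f x) with (fun _ : R => 0).
    2:{ apply functional_extensionality; intros; ring. }
    rewrite RInt_const. rewrite scal_R. exact (Rmult_0_r _).
  - destruct (Classical_Prop.classic (ex_RInt f a b)) as [Hex|Hn].
    + apply (RInt_scal f a b r Hex).
    + rewrite (RInt_empty f). rewrite RInt_empty. rewrite Rmult_0_r; reflexivity.
      * intros v Hv. apply Hn. exists (/r * v).
        pose proof (is_RInt_scal _ a b (/r) v Hv) as H2.
        rewrite scal_R in H2.
        eapply is_RInt_ext; [|exact H2].
        intros x _. cbv beta. rewrite scal_R. toR. field. auto.
      * intros v Hv. apply Hn. exists v. auto.
Qed.

Lemma RInt_rev01 (f : R -> R) : RInt (fun s => f (1 - s)) 0 1 = RInt f 0 1.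
Proof.
  destruct (Classical_Prop.classic (ex_RInt f 0 1)) as [Hex|Hn].
  - assert (H1 : ex_RInt f (-1 * 0 + 1) (-1 * 1 + 1)).
    { replace (-1 * 0 + 1) with 1 by ring. replace (-1*1+1) with 0 by ring. apply ex_RInt_swap; auto. }
    pose proof (RInt_comp_lin f (-1) 1 0 1 H1) as E.
    replace (-1 * 0 + 1) with 1 in E by ring. replace (-1*1+1) with 0 in E by ring.
    rewrite <- (opp_RInt_swap f 0 1 Hex) in E. rewrite opp_R in E.
    assert (E2 : RInt (fun y : R => scal (-1) (f (-1 * y + 1))) 0 1 = -1 * RInt (fun s => f (1 - s)) 0 1).
    { rewrite <- RInt_scal_any. apply RInt_ext. intros x _. rewrite scal_R.
      replace (-1 * x + 1) with (1 - x) by ring. reflexivity. }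
    assert (X : - RInt f 0 1 = -1 * RInt (fun s => f (1 - s)) 0 1) by (etransitivity; [symmetry; exact E | exact E2]).
    toR. lra.
  - rewrite (RInt_empty f). apply RInt_empty.
    + intros v Hv. apply Hn. exists (-1 * - v).
      assert (H1 : is_RInt (fun s => f (1 - s)) (-1 * 1 + 1) (-1 * 0 + 1) v).
      { replace (-1 * 0 + 1) with 1 by ring. replace (-1*1+1) with 0 by ring. exact Hv. }
      pose proof (is_RInt_comp_lin _ (-1) 1 1 0 v H1) as H2.
      apply is_RInt_swap in H2. rewrite opp_R in H2.
      apply (is_RInt_scal _ _ _ (-1)) in H2. rewrite scal_R in H2.
      eapply is_RInt_ext; [|exact H2].
      intros x _. cbv beta. rewrite !scal_R. replace (1 - (-1 * x + 1)) with x by ring. toR. transitivity (-1 * (-1 * f x)); [reflexivity | ring].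
    + intros v Hv. apply Hn. exists v. auto.
Qed.



Ltac cs := apply injective_projections;
  unfold Cmult, Cplus, Copp, Cminus, cconj, Cconj, RtoC, Ci, cre, cim; simpl; try ring.

Definition Tr (r : R) (h : CC -> CC) : CC -> CC :=
  fun p => Cmult (RtoC r) (cconj (h (Copp p))).

Lemma line_Tr_re r h d p t :
  cre (line (Tr r h) d p t) = r * cre (line h d (Copp p) (-t)).
Proof.
  unfold line, Tr.
  replace (Copp (Cplus p (Cmult (RtoC t) (dirv d)))) with (Cplus (Copp p) (Cmult (RtoC (- t)) (dirv d))) by cs.
  unfold Cmult, cconj, Cconj, cre, RtoC; simpl. ring.
Qed.

Lemma line_Tr_im r h d p t :
  cim (line (Tr r h) d p t) = - r * cim (line h d (Copp p) (-t)).
Proof.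
  unfold line, Tr.
  replace (Copp (Cplus p (Cmult (RtoC t) (dirv d)))) with (Cplus (Copp p) (Cmult (RtoC (- t)) (dirv d))) by cs.
  unfold Cmult, cconj, Cconj, cim, RtoC; simpl. ring.
Qed.

Lemma deriv_neg (x : R -> R) (r : R) : ex_derive x 0 ->
  is_derive (fun t => r * x (- t)) 0 (- r * Derive x 0).
Proof.
  intros H. auto_derive.
  - rewrite Ropp_0. auto.
  - replace (Derive (fun x0 => x x0) (-0)) with (Derive x 0) by (rewrite Ropp_0; reflexivity). ring.
Qed.

Definition exd (h : CC -> CC) := forall d p,
  ex_derive (fun t => cre (line h d p t)) 0 /\ ex_derive (fun t => cim (line h d p t)) 0.

Lemma pd_Tr r h : exd h -> forall d, pd d (Tr r h) = Tr (-r) (pd d h).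
Proof.
  intros H d. apply functional_extensionality; intros p. unfold pd.
  rewrite (Derive_ext (fun t => cre (line (Tr r h) d p t)) (fun t => r * cre (line h d (Copp p) (-t)))) by apply line_Tr_re.
  rewrite (Derive_ext (fun t => cim (line (Tr r h) d p t)) (fun t => -r * cim (line h d (Copp p) (-t)))) by apply line_Tr_im.
  destruct (H d (Copp p)) as [H1 H2].
  assert (E1 : Derive (fun t => r * cre (line h d (Copp p) (-t))) 0 = - r * Derive (fun t => cre (line h d (Copp p) t)) 0).
  { apply is_derive_unique. apply (deriv_neg (fun t => cre (line h d (Copp p) t)) r H1). }
  assert (E2 : Derive (fun t => -r * cim (line h d (Copp p) (-t))) 0 = - - r * Derive (fun t => cim (line h d (Copp p) t)) 0).
  { apply is_derive_unique. apply (deriv_neg (fun t => cim (line h d (Copp p) t)) (-r) H2). }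
  rewrite E1, E2. unfold Tr. cs.
Qed.

Lemma smooth_exd h ds : smooth h -> exd (iterpd ds h).
Proof. intros H d p. apply (proj2 (H ds)). Qed.

Lemma iter_Tr ds : forall r h, smooth h -> iterpd ds (Tr r h) = Tr (r * (-1)^(length ds)) (iterpd ds h).
Proof.
  induction ds as [|d ds IH]; intros r h Hs.
  - simpl. rewrite Rmult_1_r. reflexivity.
  - simpl. rewrite IH by auto. rewrite pd_Tr by (apply smooth_exd; auto).
    f_equal. ring.
Qed.

Lemma cont_pairC {U : UniformSpace} (f g : U -> R) (x : U) :
  continuous f x -> continuous g x -> continuous (fun y => ((f y, g y) : CC)) x.
Proof.
  intros Hf Hg. unfold continuous in *.
  pose proof (proj1 (filterlim_locally (F:=locally x) (U:=R_UniformSpace) f (f x)) Hf) as Hf'.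
  pose proof (proj1 (filterlim_locally (F:=locally x) (U:=R_UniformSpace) g (g x)) Hg) as Hg'.
  apply (proj2 (filterlim_locally (F:=locally x) (U:=C_UniformSpace) _ _)). intros eps.
  generalize (filter_and _ _ (Hf' eps) (Hg' eps)).
  apply filter_imp. intros y [H1 H2]. split; auto.
Qed.

Lemma cont_fstC (z : CC) : continuous (fun w : CC => fst w) z.
Proof. destruct z. apply (continuous_fst (U:=R_UniformSpace) (V:=R_UniformSpace)). Qed.
Lemma cont_sndC (z : CC) : continuous (fun w : CC => snd w) z.
Proof. destruct z. apply (continuous_snd (U:=R_UniformSpace) (V:=R_UniformSpace)). Qed.

Lemma contR_mult {U : UniformSpace} (f g : U -> R) x :
  continuous f x -> continuous g x -> continuous (fun y => f y * g y) x.
Proof. intros. apply (continuous_mult (K:=R_AbsRing) f g x); auto. Qed.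
Lemma contR_plus {U : UniformSpace} (f g : U -> R) x :
  continuous f x -> continuous g x -> continuous (fun y => f y + g y) x.
Proof. intros. apply (continuous_plus (V:=R_NormedModule) f g x); auto. Qed.
Lemma contR_opp {U : UniformSpace} (f : U -> R) x :
  continuous f x -> continuous (fun y => - f y) x.
Proof. intros. apply (continuous_opp (V:=R_NormedModule) f x); auto. Qed.
Lemma contR_minus {U : UniformSpace} (f g : U -> R) x :
  continuous f x -> continuous g x -> continuous (fun y => f y - g y) x.
Proof. intros. unfold Rminus. apply contR_plus; auto. apply contR_opp; auto. Qed.

Lemma contC_intro {U : UniformSpace} (F : U -> CC) x :
  continuous (fun y => fst (F y)) x -> continuous (fun y => snd (F y)) x -> continuous F x.
Proof.
  intros H1 H2. apply (continuous_ext (fun y => ((fst (F y), snd (F y)) : CC))).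
  intros y. destruct (F y); reflexivity. apply cont_pairC; auto.
Qed.
Lemma contC_fst {U : UniformSpace} (F : U -> CC) x : continuous F x -> continuous (fun y => fst (F y)) x.
Proof. intros H. apply (continuous_comp F (fun w : CC => fst w)); auto. apply cont_fstC. Qed.
Lemma contC_snd {U : UniformSpace} (F : U -> CC) x : continuous F x -> continuous (fun y => snd (F y)) x.
Proof. intros H. apply (continuous_comp F (fun w : CC => snd w)); auto. apply cont_sndC. Qed.

Lemma cont_Cmult {U : UniformSpace} (F G : U -> CC) x :
  continuous F x -> continuous G x -> continuous (fun y => Cmult (F y) (G y)) x.
Proof.
  intros HF HG. apply contC_intro; simpl.
  - apply contR_minus; apply contR_mult; first [apply contC_fst | apply contC_snd]; auto.
  - apply contR_plus; apply contR_mult; first [apply contC_fst | apply contC_snd]; auto.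
Qed.
Lemma cont_Cplus {U : UniformSpace} (F G : U -> CC) x :
  continuous F x -> continuous G x -> continuous (fun y => Cplus (F y) (G y)) x.
Proof.
  intros HF HG. apply contC_intro; simpl; apply contR_plus; first [apply contC_fst | apply contC_snd]; auto.
Qed.
Lemma cont_cconj {U : UniformSpace} (F : U -> CC) x :
  continuous F x -> continuous (fun y => cconj (F y)) x.
Proof.
  intros HF. apply contC_intro; simpl. apply contC_fst; auto. apply contR_opp, contC_snd; auto.
Qed.
Lemma cont_Copp {U : UniformSpace} (F : U -> CC) x :
  continuous F x -> continuous (fun y => Copp (F y)) x.
Proof.
  intros HF. apply contC_intro; simpl; apply contR_opp; first [apply contC_fst | apply contC_snd]; auto.
Qed.
Lemma cont_constC {U : UniformSpace} (c : CC) x : continuous (fun _ : U => c) x.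
Proof. apply continuous_const. Qed.
Lemma cont_idC (x : CC) : continuous (fun y : CC => y) x.
Proof. apply continuous_id. Qed.

Lemma cont_Tr r h p : continuous h (Copp p) -> continuous (Tr r h) p.
Proof.
  intros H. unfold Tr. apply cont_Cmult. apply cont_constC.
  apply cont_cconj. apply (continuous_comp (fun y : CC => Copp y) h). apply cont_Copp, cont_idC. auto.
Qed.

Lemma smooth_Tr r h : smooth h -> smooth (Tr r h).
Proof.
  intros Hs ds. rewrite iter_Tr by auto. split.
  - intros p. apply cont_Tr. apply (proj1 (Hs ds)).
  - intros d p. destruct (proj2 (Hs ds) d (Copp p)) as [H1 H2]. split.
    + eapply ex_derive_ext. intros t; symmetry; apply line_Tr_re.
      eexists. apply (deriv_neg (fun t => cre (line (iterpd ds h) d (Copp p) t))); auto.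
    + eapply ex_derive_ext. intros t; symmetry; apply line_Tr_im.
      eexists. apply (deriv_neg (fun t => cim (line (iterpd ds h) d (Copp p) t))); auto.
Qed.

Lemma Dzb_Tr f p : smooth f -> Dzb (Tr 1 f) p = cconj (Dz f (Copp p)).
Proof.
  intros Hs. unfold Dzb, dzb, Dz, dz. rewrite !pd_Tr by (apply (smooth_exd f nil Hs)).
  unfold Tr. cs.
Qed.

Definition refl (u : vfun) : vfun :=
  fun z => (Tr 1 (fun w => fst (u w)) z, Tr 1 (fun w => snd (u w)) z).

Lemma CoppK z : Copp (Copp z) = z.
Proof. destruct z; cs. Qed.

Lemma chi_norm g : fst (chi g) * fst (chi g) + snd (chi g) * snd (chi g) = 1.
Proof. unfold chi, cexpi; simpl. pose proof (sin2_cos2 (rinner g Kpt)). unfold Rsqr in H. lra. Qed.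

Lemma unit_mult c : fst c * fst c + snd c * snd c = 1 -> Cmult c (cconj c) = RtoC 1.
Proof. intros H. cs. rewrite <- H. ring. Qed.
Lemma unit_mult' c : fst c * fst c + snd c * snd c = 1 -> Cmult (cconj c) c = RtoC 1.
Proof. intros H. cs. rewrite <- H. ring. Qed.

Lemma refl_L0 us : L0_inv us -> L0_inv (refl us).
Proof.
  intros Hinv z a b. unfold refl, Tr. cbn [fst snd].
  destruct (Hinv (Copp (Cplus z (latpt a b))) a b) as [E1 E2].
  replace (Cplus (Copp (Cplus z (latpt a b))) (latpt a b)) with (Copp z) in E1, E2 by cs.
  rewrite <- E1, <- E2. pose proof (chi_norm (latpt a b)) as Hn.
  set (c := chi (latpt a b)) in *.
  split.
  - transitivity (Cmult (Cmult c (cconj c)) (Cmult (RtoC 1) (cconj (fst (us (Copp z)))))). cs.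
    rewrite unit_mult by auto. cs.
  - transitivity (Cmult (Cmult (cconj c) c) (Cmult (RtoC 1) (cconj (snd (us (Copp z)))))).
    unfold cconj, Cconj. cs.
    rewrite unit_mult' by auto. cs.
Qed.

Lemma refl_ker U alpha k us :
  in_ker_Dstar U (RtoC alpha) k us -> in_ker_D U (RtoC alpha) k (refl us).
Proof.
  intros [[Hs1 [Hs2 Hinv]] HD]. split; [split; [|split]|].
  - change (smooth (Tr 1 (fun w => fst (us w)))). apply smooth_Tr; auto.
  - change (smooth (Tr 1 (fun w => snd (us w)))). apply smooth_Tr; auto.
  - apply refl_L0; auto.
  - intros z. specialize (HD (Copp z)). unfold Dstark in HD. unfold Dk.
    change (fun w => fst (refl us w)) with (Tr 1 (fun w => fst (us w))).
    change (fun w => snd (refl us w)) with (Tr 1 (fun w => snd (us w))).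
    rewrite !Dzb_Tr by auto. rewrite CoppK in HD.
    pose proof (f_equal fst HD) as E1. pose proof (f_equal snd HD) as E2.
    cbn [fst snd] in E1, E2.
    unfold refl, Tr; cbn [fst snd].
    apply injective_projections; cbn [fst snd].
    + match type of E1 with ?Y = _ => transitivity (cconj Y) end; [cs | rewrite E1; cs].
    + match type of E2 with ?Y = _ => transitivity (cconj Y) end; [cs | rewrite E2; cs].
Qed.



Lemma latpt11 : latpt 1 1 = Cplus (RtoC 1) omega.
Proof. unfold latpt. cs. Qed.

Lemma int_torus_scal r g :
  int_torus (fun z => Cmult (RtoC r) (g z)) = Cmult (RtoC r) (int_torus g).
Proof.
  unfold int_torus.
  replace (fun s => RInt (fun t => cre (Cmult (RtoC r) (g (Cplus (RtoC s) (Cmult (RtoC t) omega))))) 0 1)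
    with (fun s => r * RInt (fun t => cre (g (Cplus (RtoC s) (Cmult (RtoC t) omega)))) 0 1).
  2:{ apply functional_extensionality; intros s. rewrite <- RInt_scal_any. apply RInt_ext.
      intros x _. unfold cre, Cmult, RtoC; simpl. ring. }
  replace (fun s => RInt (fun t => cim (Cmult (RtoC r) (g (Cplus (RtoC s) (Cmult (RtoC t) omega))))) 0 1)
    with (fun s => r * RInt (fun t => cim (g (Cplus (RtoC s) (Cmult (RtoC t) omega)))) 0 1).
  2:{ apply functional_extensionality; intros s. rewrite <- RInt_scal_any. apply RInt_ext.
      intros x _. unfold cim, Cmult, RtoC; simpl. ring. }
  rewrite !RInt_scal_any.
  generalize (RInt (fun s => RInt (fun t => cre (g (Cplus (RtoC s) (Cmult (RtoC t) omega)))) 0 1) 0 1).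
  generalize (RInt (fun s => RInt (fun t => cim (g (Cplus (RtoC s) (Cmult (RtoC t) omega)))) 0 1) 0 1).
  intros A B. cs.
Qed.

Lemma dbl_neg (phi : CC -> R) (g : CC -> CC) :
  (forall z, g (Cplus z (latpt 1 1)) = g z) ->
  RInt (fun s => RInt (fun t => phi (g (Copp (Cplus (RtoC s) (Cmult (RtoC t) omega))))) 0 1) 0 1 =
  RInt (fun s => RInt (fun t => phi (g (Cplus (RtoC s) (Cmult (RtoC t) omega)))) 0 1) 0 1.
Proof.
  intros Hp.
  set (I := fun s' => RInt (fun t => phi (g (Cplus (RtoC s') (Cmult (RtoC t) omega)))) 0 1).
  change (RInt (fun s => RInt (fun t => phi (g (Copp (Cplus (RtoC s) (Cmult (RtoC t) omega))))) 0 1) 0 1 = RInt I 0 1).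
  rewrite <- (RInt_rev01 I).
  apply RInt_ext; intros s _. unfold I.
  set (J := fun t' => phi (g (Cplus (RtoC (1 - s)) (Cmult (RtoC t') omega)))).
  change (RInt (fun t => phi (g (Copp (Cplus (RtoC s) (Cmult (RtoC t) omega))))) 0 1 = RInt J 0 1).
  rewrite <- (RInt_rev01 J).
  apply RInt_ext; intros t _. unfold J. rewrite <- Hp. rewrite latpt11.
  f_equal. f_equal. unfold omega. cs.
Qed.

Lemma int_torus_neg g :
  (forall z, g (Cplus z (latpt 1 1)) = g z) ->
  int_torus (fun z => g (Copp z)) = int_torus g.
Proof.
  intros Hp. unfold int_torus. rewrite (dbl_neg cre g Hp), (dbl_neg cim g Hp). reflexivity.
Qed.

Lemma cexpi_mult a b : Cmult (cexpi a) (cexpi b) = cexpi (a + b).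
Proof. unfold cexpi. cs; [rewrite cos_plus | rewrite sin_plus]; ring. Qed.

Lemma rinner11 : rinner (latpt 1 1) Kpt = 2 * PI / 3.
Proof. rewrite latpt11. unfold rinner, Kpt, omega, cre, cconj, Cconj, Cmult, Cplus, RtoC. simpl. field. Qed.

Lemma chi3 : Cmult (Cmult (chi (latpt 1 1)) (chi (latpt 1 1))) (chi (latpt 1 1)) = RtoC 1.
Proof.
  unfold chi. rewrite !cexpi_mult. rewrite rinner11.
  replace (2 * PI / 3 + 2 * PI / 3 + 2 * PI / 3) with (2 * PI) by field.
  unfold cexpi. rewrite cos_2PI, sin_2PI. reflexivity.
Qed.



Lemma L0_shift u a b z : L0_inv u ->
  fst (u (Cplus z (latpt a b))) = Cmult (cconj (chi (latpt a b))) (fst (u z)) /\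
  snd (u (Cplus z (latpt a b))) = Cmult (chi (latpt a b)) (snd (u z)).
Proof.
  intros H. destruct (H z a b) as [E1 E2]. pose proof (chi_norm (latpt a b)) as Hn.
  split.
  - rewrite <- E1. rewrite Cmult_assoc, (unit_mult' _ Hn), Cmult_1_l. reflexivity.
  - rewrite <- E2. rewrite Cmult_assoc, (unit_mult _ Hn), Cmult_1_l. reflexivity.
Qed.

Definition Nf (u : vfun) (y : CC) : CC :=
  Cplus (Cmult (fst (u y)) (cconj (fst (u y)))) (Cmult (snd (u y)) (cconj (snd (u y)))).
Definition Gf (V : CC -> CC) (u : vfun) (y : CC) : CC :=
  Cplus (Cmult (Cmult (V y) (snd (u y))) (cconj (fst (u y))))
        (Cmult (Cmult (V (Copp y)) (fst (u y))) (cconj (snd (u y)))).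

Lemma N_per u z : L0_inv u -> Nf u (Cplus z (latpt 1 1)) = Nf u z.
Proof.
  intros H. destruct (L0_shift u 1 1 z H) as [E1 E2]. unfold Nf. rewrite E1, E2.
  pose proof (chi_norm (latpt 1 1)) as Hn. set (c := chi (latpt 1 1)) in *.
  transitivity (Cmult (Cmult c (cconj c)) (Nf u z)).
  - unfold Nf. unfold cconj, Cconj. cs.
  - rewrite (unit_mult _ Hn). unfold Nf. cs.
Qed.

Lemma G_per V u z : L0_inv u -> V_hyp V -> Gf V u (Cplus z (latpt 1 1)) = Gf V u z.
Proof.
  intros H [_ [_ [_ [_ HVp]]]]. destruct (L0_shift u 1 1 z H) as [E1 E2]. unfold Gf. rewrite E1, E2.
  rewrite HVp.
  pose proof (chi_norm (latpt 1 1)) as Hn.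
  assert (EV : V (Copp (Cplus z (latpt 1 1))) = Cmult (cconj (chi (latpt 1 1))) (V (Copp z))).
  { pose proof (HVp (Copp (Cplus z (latpt 1 1))) 1%Z 1%Z) as E.
    replace (Cplus (Copp (Cplus z (latpt 1 1))) (latpt 1 1)) with (Copp z) in E by cs.
    rewrite E. rewrite Cmult_assoc, (unit_mult' _ Hn), Cmult_1_l. reflexivity. }
  rewrite EV. pose proof chi3 as H3.
  set (c := chi (latpt 1 1)) in *.
  assert (H3' : Cmult (Cmult (cconj c) (cconj c)) (cconj c) = RtoC 1).
  { transitivity (cconj (Cmult (Cmult c c) c)). unfold cconj, Cconj; cs. rewrite H3. cs. }
  transitivity (Cplus (Cmult (Cmult (Cmult c c) c) (Cmult (Cmult (V z) (snd (u z))) (cconj (fst (u z)))))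
                      (Cmult (Cmult (Cmult (cconj c) (cconj c)) (cconj c)) (Cmult (Cmult (V (Copp z)) (fst (u z))) (cconj (snd (u z)))))).
  - unfold cconj, Cconj. cs.
  - rewrite H3, H3'. rewrite !Cmult_1_l. reflexivity.
Qed.



Theorem lemma3p2 (U V : Defs.CC -> Defs.CC) (alpha : R) :
  U_hyp U -> V_hyp V ->
  magic U (RtoC alpha) -> simple U (RtoC alpha) ->
  forall (k : Defs.CC) (u us : vfun),
    in_ker_D U (RtoC alpha) k u -> unit_vec u ->
    in_ker_Dstar U (RtoC alpha) k us -> unit_vec us ->
    braket u (Cop V u) = braket us (Cop V us).
Proof.
  intros HU HV Hmag Hsim k u us Hu Huu Hus Husus.
  destruct (Hsim k) as [u0 [Hu0 [Hnz Hrep]]].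
  destruct (Hrep u Hu) as [c1 Hc1].
  destruct (Hrep (refl us) (refl_ker _ _ _ _ Hus)) as [c2 Hc2].
  assert (Hinvu : L0_inv u) by apply (proj2 (proj2 (proj1 Hu))).
  unfold unit_vec in Huu, Husus.
  change (int_torus (Nf u) = RtoC 1) in Huu.
  assert (Hc1nz : c1 <> RtoC 0).
  { intros E. subst c1.
    assert (EN : Nf u = fun z => Cmult (RtoC 0) (RtoC 0)).
    { apply functional_extensionality; intros z. unfold Nf. rewrite Hc1. cbn [fst snd]. cs. }
    rewrite EN in Huu. rewrite int_torus_scal in Huu. revert Huu.
    generalize (int_torus (fun _ : CC => RtoC 0)). intros X HX.
    apply (f_equal fst) in HX. unfold Cmult, RtoC in HX; simpl in HX. lra. }
  set (c := Cmult c2 (Cinv c1)).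
  assert (key : Cmult c c1 = c2).
  { unfold c. rewrite <- Cmult_assoc, Cinv_l by auto. rewrite Cmult_comm, Cmult_1_l. reflexivity. }
  assert (Hform : forall z, us z = (Cmult (cconj c) (cconj (fst (u (Copp z)))),
                                    Cmult (cconj c) (cconj (snd (u (Copp z)))))).
  { intros z. pose proof (Hc2 (Copp z)) as E. unfold refl, Tr in E. rewrite CoppK in E.
    pose proof (f_equal fst E) as E1. pose proof (f_equal snd E) as E2. cbn [fst snd] in E1, E2.
    rewrite (Hc1 (Copp z)). cbn [fst snd].
    apply injective_projections; cbn [fst snd].
    - transitivity (cconj (Cmult (RtoC 1) (cconj (fst (us z))))). cs.
      rewrite E1, <- key. unfold cconj, Cconj. cs.
    - transitivity (cconj (Cmult (RtoC 1) (cconj (snd (us z))))). cs.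
      rewrite E2, <- key. unfold cconj, Cconj. cs. }
  set (rho := fst c * fst c + snd c * snd c).
  assert (HI1 : (fun z => Cplus (Cmult (fst (us z)) (cconj (fst (us z)))) (Cmult (snd (us z)) (cconj (snd (us z)))))
               = fun z => Cmult (RtoC rho) (Nf u (Copp z))).
  { apply functional_extensionality; intros z. rewrite Hform. unfold Nf, rho. cbn [fst snd].
    unfold cconj, Cconj. cs. }
  assert (HI2 : (fun z => Cplus (Cmult (fst (Cop V us z)) (cconj (fst (us z)))) (Cmult (snd (Cop V us z)) (cconj (snd (us z)))))
               = fun z => Cmult (RtoC rho) (Gf V u (Copp z))).
  { apply functional_extensionality; intros z. unfold Cop. cbn [fst snd]. rewrite Hform. unfold Gf, rho.
    cbn [fst snd]. rewrite CoppK. unfold cconj, Cconj. cs. }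
  unfold braket in Husus. rewrite HI1 in Husus.
  rewrite int_torus_scal in Husus.
  rewrite (int_torus_neg (Nf u)) in Husus by (intros; apply N_per; auto).
  rewrite Huu in Husus.
  assert (Hrho : rho = 1).
  { apply (f_equal fst) in Husus. unfold Cmult, RtoC in Husus; simpl in Husus. lra. }
  unfold braket at 2. rewrite HI2. rewrite int_torus_scal.
  rewrite (int_torus_neg (Gf V u)) by (intros; apply G_per; auto).
  rewrite Hrho. rewrite Cmult_1_l. reflexivity.
Qed.
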